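(* Let $\Gamma$ be a $g\mathbf{PAI}$-theory. For all formulas $\varphi,\psi$: $[N(\varphi)]_{\sim_\Gamma}\le_\oplus[N(\psi)]_{\sim_\Gamma}$ in the quotient algebra $\langle N[Fm]/{\sim_\Gamma},\oplus\rangle$ if and only if $N(\varphi)\le_\Gamma N(\psi)$ (equivalently, iff $\varphi\prec\psi\in\Gamma$).
   Context: Language: fix a countable set $Var$ of variables; $Fm$ is the set of formulas built from $Var$ with unary $\neg,\Box$ and binary $\vee,\to$. Abbreviations: $\varphi\wedge\psi:=\neg(\neg\varphi\vee\neg\psi)$, $\varphi\supset\psi:=\neg\varphi\vee\psi$, $\varphi\equiv\psi:=(\varphi\supset\psi)\wedge(\psi\supset\varphi)$, $\varphi\prec\psi:=\psi\to(\varphi\vee\neg\varphi)$. $g\mathbf{PAI}$ is the Hilbert calculus with axiom schemes (A1) $\varphi\supset(\psi\supset\varphi)$; (A2) $(\varphi\supset(\psi\supset\chi))\supset((\varphi\supset\psi)\supset(\varphi\supset\chi))$; (A3) $(\neg\varphi\supset\neg\psi)\supset(\psi\supset\varphi)$; (A4) $(\varphi\to\psi)\equiv(\Box(\varphi\supset\psi)\wedge(\psi\prec\varphi))$; (A5) $((\varphi\to\psi)\prec(\varphi\vee\psi))\wedge((\varphi\vee\psi)\prec(\varphi\to\psi))$; (K) $\Box(\varphi\supset\psi)\supset(\Box\varphi\supset\Box\psi)$; (T) $\Box\varphi\supset\varphi$; (4) $\Box\varphi\supset\Box\Box\varphi$; (O1) $\varphi\prec\varphi$; (O2) $((\varphi\prec\psi)\wedge(\psi\prec\chi))\supset(\varphi\prec\chi)$;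 (O3) $(\varphi\prec\psi)\supset((\varphi\vee\psi)\prec\psi)$; (O4) $((\varphi\prec\psi)\equiv(\varphi\prec\neg\psi))\wedge((\varphi\prec\psi)\equiv(\neg\varphi\prec\psi))$; (O5) $((\varphi\prec\psi)\equiv(\varphi\prec\Box\psi))\wedge((\varphi\prec\psi)\equiv(\Box\varphi\prec\psi))$; (C1) $(\varphi\prec(\varphi\vee\psi))\wedge(\psi\prec(\varphi\vee\psi))$; (C2) $((\varphi\prec\chi)\wedge(\psi\prec\chi))\supset((\varphi\vee\psi)\prec\chi)$; (C3) $((\varphi\prec\chi)\wedge(\chi\prec\varphi)\wedge(\psi\prec\zeta)\wedge(\zeta\prec\psi))\supset((\varphi\to\psi)\prec(\chi\to\zeta))$; rules (MP) from $\varphi,\varphi\supset\psi$ infer $\psi$, (Nec$_g$) from $\varphi$ infer $\Box\varphi$. A $g\mathbf{PAI}$-theory is a set of formulas closed under derivability in this calculus. $N$ is the map from $Fm$ onto the algebra of terms over $Var$ in a binary symbol $\oplus$ given by $N(p)=p$, $N(\neg\varphi)=N(\Box\varphi)=N(\varphi)$, $N(\varphi\vee\psi)=N(\varphi\to\psi)=N(\varphi)\oplus N(\psi)$; $N[Fm]$ is its image. For a theory $\Gamma$ define on $N[Fm]$: $N(\varphi)\le_\Gamma N(\psi)$ iff $\varphi\prec\psi\in\Gamma$ (independent of the chosen preimages), and $N(\varphi)\sim_\Gamma N(\psi)$ iff $N(\varphi)\le_\Gamma N(\psi)$ and $N(\psi)\le_\Gamma N(\varphi)$; $\sim_\Gamma$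 is a congruence of $\langle N[Fm],\oplus\rangle$ and $\langle N[Fm]/{\sim_\Gamma},\oplus\rangle$ is the quotient. On the quotient, $x\le_\oplus y$ iff $x\oplus y=y$. *)

(* Defs.v *)
From Stdlib Require Import Classical FunctionalExtensionality PropExtensionality.

Definition Var := nat.

Inductive Fm : Type :=
| FVar : Var -> Fm
| FNeg : Fm -> Fm
| FBox : Fm -> Fm
| FOr  : Fm -> Fm -> Fm
| FArr : Fm -> Fm -> Fm.   (* the binary connective "->" of the language *)

Definition FAnd (a b : Fm) : Fm := FNeg (FOr (FNeg a) (FNeg b)).
Definition FImp (a b : Fm) : Fm := FOr (FNeg a) b.
Definition FEqv (a b : Fm) : Fm := FAnd (FImp a b) (FImp b a).
Definition FPrec (a b : Fm) : Fm := FArr b (FOr a (FNeg a)).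

Inductive IsAxiom : Fm -> Prop :=
| A1 a b : IsAxiom (FImp a (FImp b a))
| A2 a b c : IsAxiom (FImp (FImp a (FImp b c)) (FImp (FImp a b) (FImp a c)))
| A3 a b : IsAxiom (FImp (FImp (FNeg a) (FNeg b)) (FImp b a))
| A4 a b : IsAxiom (FEqv (FArr a b) (FAnd (FBox (FImp a b)) (FPrec b a)))
| A5 a b : IsAxiom (FAnd (FPrec (FArr a b) (FOr a b)) (FPrec (FOr a b) (FArr a b)))
| AK a b : IsAxiom (FImp (FBox (FImp a b)) (FImp (FBox a) (FBox b)))
| AT a : IsAxiom (FImp (FBox a) a)
| A4' a : IsAxiom (FImp (FBox a) (FBox (FBox a)))
| O1 a : IsAxiom (FPrec a a)
| O2 a b c : IsAxiom (FImp (FAnd (FPrec a b) (FPrec b c)) (FPrec a c))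
| O3 a b : IsAxiom (FImp (FPrec a b) (FPrec (FOr a b) b))
| O4 a b : IsAxiom (FAnd (FEqv (FPrec a b) (FPrec a (FNeg b)))
                       (FEqv (FPrec a b) (FPrec (FNeg a) b)))
| O5 a b : IsAxiom (FAnd (FEqv (FPrec a b) (FPrec a (FBox b)))
                       (FEqv (FPrec a b) (FPrec (FBox a) b)))
| C1 a b : IsAxiom (FAnd (FPrec a (FOr a b)) (FPrec b (FOr a b)))
| C2 a b c : IsAxiom (FImp (FAnd (FPrec a c) (FPrec b c)) (FPrec (FOr a b) c))
| C3 a b c d : IsAxiom (FImp (FAnd (FAnd (FAnd (FPrec a c) (FPrec c a)) (FPrec b d)) (FPrec d b))
                           (FPrec (FArr a b) (FArr c d))).

Inductive derivable (G : Fm -> Prop) : Fm -> Prop :=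
| d_ax a : IsAxiom a -> derivable G a
| d_prem a : G a -> derivable G a
| d_mp a b : derivable G a -> derivable G (FImp a b) -> derivable G b
| d_nec a : derivable G a -> derivable G (FBox a).

Definition theory (G : Fm -> Prop) : Prop :=
  forall a, derivable G a -> G a.

Inductive Term : Type :=
| TVar : Var -> Term
| TOplus : Term -> Term -> Term.

Fixpoint N (a : Fm) : Term :=
  match a with
  | FVar p => TVar p
  | FNeg a => N a
  | FBox a => N a
  | FOr a b => TOplus (N a) (N b)
  | FArr a b => TOplus (N a) (N b)
  end.

Definition inNFm (t : Term) : Prop := exists a, N a = t.

(* t ≤_Γ s on N[Fm]: via (some) preimages; the paper shows the choice of
   preimages is irrelevant. *)
Definition leG (G : Fm -> Prop) (t s : Term) : Prop :=
  exists a b, N a = t /\ N b = s /\ G (FPrec a b).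

Definition simG (G : Fm -> Prop) (t s : Term) : Prop := leG G t s /\ leG G s t.

Definition cls (G : Fm -> Prop) (t : Term) : Term -> Prop :=
  fun s => inNFm s /\ simG G s t.

(* The operation ⊕ of the quotient: [t] ⊕ [s] := [t ⊕ s]
   (well defined since ~Γ is a congruence). *)
Definition qoplus (G : Fm -> Prop) (t s : Term) : Term -> Prop := cls G (TOplus t s).

Definition qle (G : Fm -> Prop) (t s : Term) : Prop := qoplus G t s = cls G s.

(* Main.v *)
Require Import Defs.
From Stdlib Require Import Classical FunctionalExtensionality PropExtensionality.

Inductive pr (H : Fm -> Prop) : Fm -> Prop :=
| p_a1 a b : pr H (FImp a (FImp b a))
| p_a2 a b c : pr H (FImp (FImp a (FImp b c)) (FImp (FImp a b) (FImp a c)))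
| p_a3 a b : pr H (FImp (FImp (FNeg a) (FNeg b)) (FImp b a))
| p_h a : H a -> pr H a
| p_mp a b : pr H a -> pr H (FImp a b) -> pr H b.

Lemma pr_mono (H H' : Fm -> Prop) a : (forall x, H x -> H' x) -> pr H a -> pr H' a.
Proof. intros Hs D; induction D; eauto using pr. Qed.

Lemma imp_refl H a : pr H (FImp a a).
Proof.
  eapply p_mp. apply (p_a1 H a a).
  eapply p_mp. apply (p_a1 H a (FImp a a)).
  apply (p_a2 H a (FImp a a) a).
Qed.

Definition add (H : Fm -> Prop) a := fun x => H x \/ x = a.

Lemma deduction H a b : pr (add H a) b -> pr H (FImp a b).
Proof.
  intro D; induction D.
  - eapply p_mp; [apply p_a1|apply p_a1].
  - eapply p_mp; [apply p_a2|apply p_a1].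
  - eapply p_mp; [apply p_a3|apply p_a1].
  - destruct H0 as [H0|H0].
    + eapply p_mp; [apply p_h; exact H0|apply p_a1].
    + subst; apply imp_refl.
  - eapply p_mp. exact IHD1. eapply p_mp. exact IHD2. apply p_a2.
Qed.

Lemma up H a b : pr H b -> pr (add H a) b.
Proof. apply pr_mono. intros x Hx; left; exact Hx. Qed.

Lemma hyp H a : pr (add H a) a.
Proof. apply p_h. right; reflexivity. Qed.

Lemma dneg_elim H a : pr H (FImp (FNeg (FNeg a)) a).
Proof.
  apply deduction.
  eapply p_mp. apply hyp.
  eapply p_mp. 2: apply (p_a3 _ a (FNeg (FNeg a))).
  eapply p_mp. 2: apply (p_a3 _ (FNeg (FNeg (FNeg a))) (FNeg a)).
  eapply p_mp. apply hyp. apply p_a1.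
Qed.

Lemma dneg_intro H a : pr H (FImp a (FNeg (FNeg a))).
Proof. eapply p_mp. apply dneg_elim. apply p_a3. Qed.

Lemma syl H a b c : pr H (FImp a b) -> pr H (FImp b c) -> pr H (FImp a c).
Proof.
  intros D1 D2. apply deduction.
  eapply p_mp. 2: apply up, D2.
  eapply p_mp. apply hyp. apply up, D1.
Qed.

Lemma contra H a b : pr H (FImp a b) -> pr H (FImp (FNeg b) (FNeg a)).
Proof.
  intros D. eapply p_mp. 2: apply (p_a3 _ (FNeg a) (FNeg b)).
  eapply syl. apply dneg_elim. eapply syl. exact D. apply dneg_intro.
Qed.

Lemma neg_imp H a b : pr H (FImp (FNeg a) (FImp a b)).
Proof.
  apply deduction. eapply p_mp. 2: apply p_a3.
  eapply p_mp. apply hyp. apply p_a1.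
Qed.

Lemma and1 H x y : pr H (FAnd x y) -> pr H x.
Proof.
  intros D. eapply p_mp. exact D.
  eapply syl. apply contra. apply (neg_imp H x (FNeg y)). apply dneg_elim.
Qed.

Lemma and2 H x y : pr H (FAnd x y) -> pr H y.
Proof.
  intros D. eapply p_mp. exact D.
  eapply syl. apply contra. apply (p_a1 H (FNeg y) x). apply dneg_elim.
Qed.

Lemma andI H x y : pr H x -> pr H y -> pr H (FAnd x y).
Proof.
  intros Dx Dy.
  assert (L : pr H (FImp x (FImp (FImp x (FNeg y)) (FNeg y)))).
  { apply deduction, deduction. eapply p_mp. apply up, hyp. apply hyp. }
  assert (L2 := p_mp _ _ _ Dx L).
  apply contra in L2.
  eapply p_mp. 2: exact L2. eapply p_mp. exact Dy. apply dneg_intro.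
Qed.

Section G.
Variable G : Fm -> Prop.
Hypothesis HG : theory G.

Lemma prG a : pr G a -> G a.
Proof.
  intro D; induction D; apply HG.
  - apply d_ax, A1.
  - apply d_ax, A2.
  - apply d_ax, A3.
  - apply d_prem; assumption.
  - apply (d_mp G a b); apply d_prem; assumption.
Qed.

Lemma gax a : IsAxiom a -> G a.
Proof. intro; apply HG, d_ax; assumption. Qed.

Lemma gmp a b : G a -> G (FImp a b) -> G b.
Proof. intros Ha Hab; apply prG; apply (p_mp _ a b); apply p_h; assumption. Qed.

Lemma gand x y : G x -> G y -> G (FAnd x y).
Proof. intros; apply prG, andI; apply p_h; assumption. Qed.
Lemma gand1 x y : G (FAnd x y) -> G x.
Proof. intros; apply prG; eapply and1; apply p_h; eassumption. Qed.
Lemma gand2 x y : G (FAnd x y) -> G y.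
Proof. intros; apply prG; eapply and2; apply p_h; eassumption. Qed.
Lemma geqv x y : G (FEqv x y) -> (G x <-> G y).
Proof.
  intro E; split; intro; eapply gmp; try eassumption.
  apply (gand1 _ _ E). apply (gand2 _ _ E).
Qed.

Definition P a b := G (FPrec a b).

Lemma Prefl a : P a a.
Proof. apply gax, O1. Qed.
Lemma Ptrans a b c : P a b -> P b c -> P a c.
Proof. intros. apply (gmp (FAnd (FPrec a b) (FPrec b c))). apply gand; assumption. apply gax, O2. Qed.
Lemma Pneg_r a b : P a (FNeg b) <-> P a b.
Proof. symmetry; apply geqv. eapply gand1. apply gax, O4. Qed.
Lemma Pneg_l a b : P (FNeg a) b <-> P a b.
Proof. symmetry; apply geqv. eapply gand2. apply gax, O4. Qed.
Lemma Pbox_r a b : P a (FBox b) <-> P a b.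
Proof. symmetry; apply geqv. eapply gand1. apply gax, O5. Qed.
Lemma Pbox_l a b : P (FBox a) b <-> P a b.
Proof. symmetry; apply geqv. eapply gand2. apply gax, O5. Qed.
Lemma Por1 a b : P a (FOr a b).
Proof. eapply gand1. apply gax, C1. Qed.
Lemma Por2 a b : P b (FOr a b).
Proof. eapply gand2. apply gax, C1. Qed.
Lemma Por_l a b c : P a c -> P b c -> P (FOr a b) c.
Proof. intros. apply (gmp (FAnd (FPrec a c) (FPrec b c))). apply gand; assumption. apply gax, C2. Qed.
Lemma Parr1 a b : P (FArr a b) (FOr a b).
Proof. eapply gand1. apply gax, A5. Qed.
Lemma Parr2 a b : P (FOr a b) (FArr a b).
Proof. eapply gand2. apply gax, A5. Qed.

Lemma Por_mono a b c d : P a c -> P b d -> P (FOr a b) (FOr c d).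
Proof.
  intros; apply Por_l; eapply Ptrans; eauto using Por1, Por2.
Qed.

Fixpoint fT (t : Term) : Fm :=
  match t with
  | TVar p => FVar p
  | TOplus s u => FOr (fT s) (fT u)
  end.

Lemma canon a : P a (fT (N a)) /\ P (fT (N a)) a.
Proof.
  induction a as [p|a IH|a IH|a IHa b IHb|a IHa b IHb]; simpl.
  - split; apply Prefl.
  - destruct IH; split; [apply Pneg_l|apply Pneg_r]; assumption.
  - destruct IH; split; [apply Pbox_l|apply Pbox_r]; assumption.
  - destruct IHa, IHb; split; apply Por_mono; assumption.
  - destruct IHa, IHb; split.
    + eapply Ptrans. apply Parr1. apply Por_mono; assumption.
    + eapply Ptrans. 2: apply Parr2. apply Por_mono; assumption.
Qed.

Lemma Nsame a b : N a = N b -> P a b.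
Proof.
  intro E. eapply Ptrans. apply (canon a). rewrite E. apply (canon b).
Qed.

Lemma leG_P a b : leG G (N a) (N b) <-> P a b.
Proof.
  split.
  - intros (a' & b' & E1 & E2 & H).
    eapply Ptrans. apply Nsame; symmetry; exact E1.
    eapply Ptrans. exact H. apply Nsame; exact E2.
  - intro H; exists a, b; auto.
Qed.

End G.

Theorem mainTheorem12 (G : Fm -> Prop) (HG : theory G) (phi psi : Fm) :
  qle G (N phi) (N psi) <-> G (FPrec phi psi).
Proof.
  unfold qle, qoplus. change (TOplus (N phi) (N psi)) with (N (FOr phi psi)).
  split.
  - intro E.
    assert (C : cls G (N psi) (N psi)).
    { split. exists psi; reflexivity. split; apply leG_P; auto; apply Prefl; auto. }
    rewrite <- E in C. destruct C as [_ [_ C]].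
    apply leG_P in C; auto.
    eapply Ptrans; eauto. apply Por1; auto.
  - intro H.
    assert (H1 : P G (FOr phi psi) psi) by (apply Por_l; auto; apply Prefl; auto).
    assert (H2 : P G psi (FOr phi psi)) by (apply Por2; auto).
    apply functional_extensionality; intro s.
    apply propositional_extensionality.
    unfold cls, simG; split; intros [[x Ex] [L1 L2]]; subst s;
      (split; [exists x; reflexivity|]);
      rewrite leG_P in L1, L2 by auto; rewrite !leG_P by auto;
      split; eapply Ptrans; eauto.
Qed.
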